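(* Let $p,q$ be positive integers, $\mathbf{C}=\begin{bmatrix}1 & p\\ q & 1+pq\end{bmatrix}$, $A=pq+2$, $B=\sqrt{A^2-4}$, and $G_n=\left(\frac{A+B}{2}\right)^n+\left(\frac{A-B}{2}\right)^n$, $H_n=\frac{1}{B}\left(\left(\frac{A+B}{2}\right)^n-\left(\frac{A-B}{2}\right)^n\right)$. Then for every positive integer $n$, $$\mathbf{C}^{-n}=\begin{bmatrix}\frac12 G_n+\frac{A-2}{2}H_n & -p\,H_n\\ -q\,H_n & \frac12 G_n-\frac{A-2}{2}H_n\end{bmatrix}.$$ *)

(* Defs.v *)
From mathcomp Require Import all_boot all_order all_algebra.
Set Implicit Arguments. Unset Strict Implicit. Unset Printing Implicit Defensive.
Import GRing.Theory Num.Theory.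
Local Open Scope ring_scope.

Definition Cmat (R : nzRingType) (p q : nat) : 'M[R]_2 :=
  \matrix_(i < 2, j < 2)
    (if (i == 0%N :> nat) then (if (j == 0%N :> nat) then 1 else p%:R)
     else (if (j == 0%N :> nat) then q%:R else 1 + (p * q)%:R)).

Definition Aval (R : nzRingType) (p q : nat) : R := (p * q + 2)%:R.
Definition Bval (R : rcfType) (p q : nat) : R := Num.sqrt (Aval R p q ^+ 2 - 4).
Definition Gn (R : rcfType) (p q n : nat) : R :=
  ((Aval R p q + Bval R p q) / 2) ^+ n + ((Aval R p q - Bval R p q) / 2) ^+ n.
Definition Hn (R : rcfType) (p q n : nat) : R :=
  (Bval R p q)^-1 * (((Aval R p q + Bval R p q) / 2) ^+ n
                     - ((Aval R p q - Bval R p q) / 2) ^+ n).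

(* Main.v *)
Require Import Defs.
From mathcomp Require Import all_boot all_order all_algebra.
From mathcomp Require Import ring lra.
Import Order.TTheory GRing.Theory Num.Theory.
Local Open Scope ring_scope.

Lemma step (F : fieldType) (x a b P : F) : x != 0 -> x - x^-1 != 0 -> P != 0 -> (2:F) != 0 ->
  let A := x + x^-1 in let B := x - x^-1 in let Q := (A - 2) / P in
  let G := a + b in let H := B^-1 * (a - b) in
  let G' := x * a + x^-1 * b in let H' := B^-1 * (x * a - x^-1 * b) in
  [/\ (G/2 + (A-2)/2*H) * (A - 1) + (-(P*H)) * (-Q) = G'/2 + (A-2)/2*H',
      (G/2 + (A-2)/2*H) * (-P) + (-(P*H)) * 1 = -(P*H'),
      (-(Q*H)) * (A - 1) + (G/2 - (A-2)/2*H) * (-Q) = -(Q*H') &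
      (-(Q*H)) * (-P) + (G/2 - (A-2)/2*H) * 1 = G'/2 - (A-2)/2*H'].
Proof.
move=> x0 B0 P0 twoO A B Q G H G' H'.
rewrite /Q /G /H /G' /H' /A; rewrite /B in B0 *.
have h : x * x - 1 != 0.
  apply: contra B0 => /eqP h; apply/eqP.
  have -> : x - x^-1 = (x*x-1)/x by field.
  by rewrite h mul0r.
split; field; by rewrite ?x0 ?h ?P0 ?twoO.
Qed.


Definition mk2 {F : nzRingType} (a b c d : F) : 'M[F]_2 :=
  \matrix_(i < 2, j < 2)
    (if (i == 0%N :> nat) then (if (j == 0%N :> nat) then a else b)
     else (if (j == 0%N :> nat) then c else d)).

Lemma mk2_mul (F : nzRingType) (a b c d a' b' c' d' : F) :
  mk2 a b c d * mk2 a' b' c' d' =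
  mk2 (a*a' + b*c') (a*b' + b*d') (c*a'+d*c') (c*b'+d*d').
Proof.
apply/matrixP => i j; rewrite -mulmxE !mxE !big_ord_recl big_ord0 !mxE /=.
by case: i => [[|[|//]] Hi]; case: j => [[|[|//]] Hj] /=; rewrite addr0.
Qed.

Lemma mk2_1 (F : nzRingType) : mk2 (1:F) 0 0 1 = 1.
Proof.
apply/matrixP => i j; rewrite !mxE.
by case: i => [[|[|//]] Hi]; case: j => [[|[|//]] Hj].
Qed.

Lemma gen (F : fieldType) (x P : F) (n : nat) : x != 0 -> x - x^-1 != 0 -> P != 0 -> (2:F) != 0 ->
  let A := x + x^-1 in let B := x - x^-1 in let Q := (A - 2) / P in
  let G := x ^+ n + x^-1 ^+ n in let H := B^-1 * (x ^+ n - x^-1 ^+ n) in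
  mk2 (A - 1) (-P) (-Q) 1 ^+ n =
  mk2 (G/2 + (A-2)/2*H) (-(P*H)) (-(Q*H)) (G/2 - (A-2)/2*H).
Proof.
move=> x0 B0 P0 t0 A B Q.
elim: n => [|n IH] /=.
  rewrite expr0 -mk2_1 !expr0 subrr !mulr0 oppr0 addr0 divff //.
rewrite exprSr IH mk2_mul.
have [e1 e2 e3 e4] := @step F x (x ^+ n) (x^-1 ^+ n) P x0 B0 P0 t0.
by rewrite !exprS e1 e2 e3 e4.
Qed.

Theorem proposition2 (R : rcfType) (p q n : nat) :
  (0 < p)%N -> (0 < q)%N -> (0 < n)%N ->
  (Cmat R p q) ^- n =
  \matrix_(i < 2, j < 2)
    (if (i == 0%N :> nat) then
       (if (j == 0%N :> nat)
        then Gn R p q n / 2 + (Aval R p q - 2) / 2 * Hn R p q n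
        else - (p%:R * Hn R p q n))
     else
       (if (j == 0%N :> nat)
        then - (q%:R * Hn R p q n)
        else Gn R p q n / 2 - (Aval R p q - 2) / 2 * Hn R p q n)).
Proof.
move=> p0 q0 _.
have -> : Cmat R p q = mk2 1 p%:R q%:R (1 + (p * q)%:R) by [].
rewrite /Gn /Hn.
set A := Aval R p q; set B := Bval R p q.
have hA : A = p%:R * q%:R + 2 by rewrite /A /Aval natrD natrM.
have pR : (0 : R) < p%:R by rewrite ltr0n.
have qR : (0 : R) < q%:R by rewrite ltr0n.
have pq1 : (1 : R) <= p%:R * q%:R by rewrite -natrM ler1n muln_gt0 p0 q0.
have hpos : (0 : R) < A ^+ 2 - 4.
  rewrite hA; nra.
have hB2 : B ^+ 2 = A ^+ 2 - 4 by rewrite /B /Bval -/A sqr_sqrtr // ltW.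
have Bpos : 0 < B by rewrite /B /Bval -/A sqrtr_gt0.
have t0 : (2 : R) != 0 by rewrite pnatr_eq0.
set x := (A + B) / 2.
have hxy : x * ((A - B) / 2) = 1.
  have -> : x * ((A - B) / 2) = (A ^+ 2 - B ^+ 2) / 4 by rewrite /x; field.
  by rewrite hB2; field.
have x0 : x != 0.
  by apply/eqP => h; move: hxy; rewrite h mul0r => /eqP; rewrite eq_sym oner_eq0.
have hinv : (A - B) / 2 = x^-1.
  by apply: (mulfI x0); rewrite hxy mulfV.
rewrite hinv.
have hAx : A = x + x^-1 by rewrite -hinv /x; field.
have hBx : B = x - x^-1 by rewrite -hinv /x; field.
have B0 : x - x^-1 != 0 by rewrite -hBx gt_eqF.
have P0 : (p%:R : R) != 0 by rewrite gt_eqF.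
have hq : (q%:R : R) = (A - 2) / p%:R by rewrite hA; field.
set Cinv := mk2 (A - 1) (- p%:R) (- q%:R) 1.
have e1 : mk2 1 p%:R q%:R (1 + (p * q)%:R) * Cinv = 1.
  by rewrite mk2_mul -mk2_1 natrM hA; congr mk2; ring.
have e2 : Cinv * mk2 1 p%:R q%:R (1 + (p * q)%:R) = 1.
  by rewrite mk2_mul -mk2_1 natrM hA; congr mk2; ring.
have Cu : @mk2 R 1 p%:R q%:R (1 + (p * q)%:R) \is a GRing.unit.
  by apply/unitrP; exists Cinv.
have -> : (@mk2 R 1 p%:R q%:R (1 + (p * q)%:R) : 'M[R]_2) ^- n = Cinv ^+ n.
  by rewrite -exprVn -[_^-1]mulr1 -e1 mulKr.
have -> : forall a b c d : R, \matrix_(i < 2, j < 2)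
    (if (i == 0%N :> nat) then (if (j == 0%N :> nat) then a else b)
     else (if (j == 0%N :> nat) then c else d)) = mk2 a b c d by [].
rewrite /Cinv hq hAx hBx.
exact: gen.
Qed.
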